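(* Let $q\equiv 1\pmod 4$ be a prime power. Then: (1) $SP_q$ has properties $P(1,\frac{q-1}{2})$ and $P(2,\frac{q-5}{4})$; (2) $Tr(SP_q)$ has properties $P(1,q)$, $P(2,\frac{q-1}{2})$ and $P(3,\frac{q-5}{4})$; (3) $AT(SP_q)$ has properties $P(1,q-1)$, $P(2,\frac{q-3}{2})$ and $P(3,\max(0,\frac{q-9}{4}))$.
   Context: A signified graph is a simple graph with each edge labelled positive or negative. For $x\in\mathbb{F}_q^*$ let $\mathrm{sq}(x)=+1$ if $x$ is a square and $-1$ otherwise. $SP_q$ is the complete graph on $\mathbb{F}_q$ where $xy$ is negative iff $\mathrm{sq}(y-x)=-1$. For a signified graph $(H,\Lambda)$, $AT(H,\Lambda)$ has vertex set $\{u_0,u_1:u\in V(H)\}$; for every edge $uv$ of $H$ it has edges $u_0v_0,u_1v_1$ with the sign of $uv$ and $u_0v_1,u_1v_0$ with the opposite sign; no other edges. $Tr(SP_q)=AT(SP_q^+)$ where $SP_q^+$ is $SP_q$ plus a vertex $\infty$ joined positively to all vertices; explicitly its vertices are $u_i$, $u\in\mathbb{F}_q\cup\{\infty\}$, $i\in\{0,1\}$, with $u_iv_j$ ($u\ne v\in\mathbb{F}_q$) an edge of sign $\mathrm{sq}(u-v)(-1)^{i+j}$, $\infty_iv_j$ an edge of sign $(-1)^{i+j}$, and no other edges. A signed vector of size $k$ is an element of $\{+1,-1\}^k$. For a sequence $X=(v_1,\dots,v_k)$ of $k$ distinct pairwise adjacent vertices and a signed vector $\alpha$, a vertex $u$ is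 an $\alpha$-successor of $X$ if $uv_i$ is an edge of sign $\alpha_i$ for all $i$. A signified graph has property $P(k,l)$ if every sequence of $k$ distinct pairwise adjacent vertices has at least $l$ $\alpha$-successors for every signed vector $\alpha$ of size $k$. *)

(* Defs.v *)
From HB Require Import structures.
From mathcomp Require Import all_boot all_order all_algebra all_field.
Set Implicit Arguments. Unset Strict Implicit. Unset Printing Implicit Defensive.
Import GRing.Theory.
Local Open Scope ring_scope.

(* A signified graph on a finite vertex type: an adjacency relation and,
   for adjacent vertices, a sign (true = positive, false = negative). *)
Record sigraph (V : finType) := SiGraph {
  sg_adj : rel V;
  sg_pos : V -> V -> bool }.

Definition issq (F : finFieldType) (x : F) : bool := [exists y : F, y * y == x].

Definition SP (F : finFieldType) : sigraph F :=
  SiGraph (fun x y : F => x != y) (fun x y : F => issq (y - x)).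

(* SP_q^+ : add a vertex infinity (= None) joined positively to everything *)
Definition SPplus (F : finFieldType) : sigraph (option F) :=
  SiGraph (fun x y : option F => x != y)
          (fun x y : option F =>
             match x, y with Some a, Some b => issq (b - a) | _, _ => true end).

(* AT(H): vertices (u, i), i in {0,1} encoded as bool; u_i v_j is an edge iff
   uv is, with the sign of uv if i = j and the opposite sign otherwise. *)
Definition AT (V : finType) (H : sigraph V) : sigraph (prod V bool) :=
  SiGraph (fun x y : V * bool => sg_adj H x.1 y.1)
          (fun x y : V * bool => sg_pos H x.1 y.1 == (x.2 == y.2)).

Definition Tr (F : finFieldType) : sigraph (prod (option F) bool) := AT (SPplus F).

Definition clique_seq (V : finType) (G : sigraph V) (k : nat) (X : k.-tuple V) : bool :=
  uniq X && [forall i : 'I_k, forall j : 'I_k,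
               (i != j) ==> sg_adj G (tnth X i) (tnth X j)].

Definition successor (V : finType) (G : sigraph V) (k : nat)
    (X : k.-tuple V) (alpha : k.-tuple bool) (u : V) : bool :=
  [forall i : 'I_k, sg_adj G u (tnth X i) && (sg_pos G u (tnth X i) == tnth alpha i)].

Definition propP (V : finType) (G : sigraph V) (k l : nat) : Prop :=
  forall X : k.-tuple V, clique_seq G X ->
  forall alpha : k.-tuple bool,
    (l <= #|[set u | successor G X alpha u]|)%N.

(* Main.v *)
Require Import Defs.
From mathcomp Require Import all_boot all_order all_algebra all_field.
From mathcomp Require Import all_fingroup all_solvable.
From mathcomp Require Import zify ring lra.
Set Implicit Arguments. Unset Strict Implicit. Unset Printing Implicit Defensive.
Import Order.TTheory GRing.Theory Num.Theory.
Local Open Scope ring_scope.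

Section Chi.
Variable F : finFieldType.
Hypothesis hq : (#|F| %% 4 = 1)%N.
Local Notation q := #|F|.

Lemma q_gt1 : (1 < q)%N. Proof. exact: finNzRing_gt1. Qed.
Lemma q_ge5 : (5 <= q)%N.
Proof. have := q_gt1; have := hq; have := divn_eq q 4; lia. Qed.

Definition m := (q %/ 4 * 2)%N.
Lemma qE : q = (m * 2).+1.
Proof. rewrite /m; have := hq; have := divn_eq q 4; lia. Qed.
Lemma m_gt0 : (0 < m)%N.
Proof. have := q_ge5; rewrite qE; lia. Qed.

Lemma two_nz : (2%:R : F) != 0.
Proof.
apply/negP => /eqP h2.
have h1 : (#[(GRing.one F)]%g %| 2)%N by rewrite order_dvdn FinRing.zmodXgE h2.
have h3 : (#[(GRing.one F)]%g %| q)%N.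
  by rewrite -cardsT; apply: order_dvdG; rewrite inE.
have h4 : #[(GRing.one F)]%g != 1%N by rewrite order_eq1; apply: oner_neq0.
have : #[(GRing.one F)]%g = 2%N.
  have h5 := dvdn_leq (isT : (0 < 2)%N) h1.
  have h6 := order_gt0 (GRing.one F).
  move: h4 h5 h6; lia.
move=> e; rewrite e qE in h3; move: h3; rewrite dvdn2 /=.
lia.
Qed.

Lemma N1_neq1 : (-1 : F) != 1.
Proof.
apply/negP=> /eqP h; have := two_nz.
have e : (2%:R : F) = 1 - (-1) by rewrite opprK.
by rewrite e h subrr eqxx.
Qed.

Lemma expf_pred (x : F) : x != 0 -> x ^+ (m * 2) = 1.
Proof.
move=> nz; apply: (mulfI nz); rewrite -exprS -qE expf_card mulr1 //.
Qed.

Lemma pm_cases (x : F) : x != 0 -> x ^+ m = 1 \/ x ^+ m = -1.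
Proof.
move=> nz; have : (x ^+ m) ^+ 2 == 1 by rewrite -exprM expf_pred.
by rewrite sqrf_eq1 => /orP [/eqP -> | /eqP ->]; [left|right].
Qed.

Lemma sq_pm (x : F) : x != 0 -> issq x -> x ^+ m = 1.
Proof.
move=> nz /existsP [y /eqP ey]; rewrite -ey in nz *.
have ynz : y != 0 by apply: contraNneq nz => ->; rewrite mul0r.
by rewrite -expr2 -exprM mulnC expf_pred.
Qed.

Definition Ssq := [set x : F | (x != 0) && issq x].
Definition Rm := [set x : F | x ^+ m == 1].

Lemma card_nz : #|[set x : F | x != 0]| = (m * 2)%N.
Proof.
have := cardC1 (0 : F); rewrite qE /= => <-; apply: eq_card => x; by rewrite !inE.
Qed.

Lemma SsqR : Ssq \subset Rm.
Proof. by apply/subsetP=> x; rewrite !inE => /andP [nz s]; rewrite sq_pm. Qed.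

Lemma card_Rm : (#|Rm| <= m)%N.
Proof.
have nz : ('X^m - 1 : {poly F}) != 0.
  by rewrite -size_poly_eq0 size_Xn_sub_1 ?m_gt0.
have := @max_poly_roots _ ('X^m - 1) (enum Rm) nz.
rewrite size_Xn_sub_1 ?m_gt0 // -cardE ltnS; apply.
  apply/allP=> x; rewrite mem_enum inE => /eqP h.
  by rewrite rootE !hornerE h subrr.
by rewrite enum_uniq.
Qed.

Lemma card_Ssq_ge : (m <= #|Ssq|)%N.
Proof.
pose P := \prod_(s in Ssq) ('X^2 - s%:P : {poly F}).
have fnz : forall s, s \in Ssq -> ('X^2 - s%:P : {poly F}) != 0.
  by move=> s _; rewrite -size_poly_eq0 size_XnsubC.
have Pnz : P != 0 by apply/prodf_neq0.
have hsz : size P = ((#|Ssq| * 2).+1)%N.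
  rewrite size_prod //.
  rewrite (eq_bigr (fun _ => 3%N)); last by move=> s _; rewrite size_XnsubC.
  rewrite sum_nat_const [X in (_ - X)%N](eq_card (B:=Ssq)) //; lia.
have := @max_poly_roots _ P (enum [set x : F | x != 0]) Pnz.
rewrite -cardE card_nz hsz ltnS leq_mul2r /=; apply.
  apply/allP=> z; rewrite mem_enum inE => znz.
  rewrite rootE horner_prod; apply/prodf_eq0; exists (z * z).
    rewrite inE mulf_neq0 //=.
    by apply/existsP; exists z.
  by rewrite !hornerE expr2 subrr.
by rewrite enum_uniq.
Qed.

Lemma Ssq_eq : Ssq =i Rm.
Proof.
apply/subset_cardP; last exact: SsqR.
apply/eqP; rewrite eqn_leq subset_leq_card ?SsqR //=.
exact: leq_trans card_Rm card_Ssq_ge.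
Qed.

Lemma card_Ssq : #|Ssq| = m.
Proof.
apply/eqP; rewrite eqn_leq card_Ssq_ge andbT.
by rewrite (eq_card Ssq_eq) card_Rm.
Qed.

Lemma issq_pm (x : F) : x != 0 -> issq x = (x ^+ m == 1).
Proof.
move=> nz; have := Ssq_eq x; rewrite !inE nz /= => ->; by [].
Qed.

Definition chi (x : F) : int := if x == 0 then 0 else if issq x then 1 else -1.

Lemma chi0 : chi 0 = 0. Proof. by rewrite /chi eqxx. Qed.

Lemma chi_nz (x : F) : x != 0 -> chi x = if x ^+ m == 1 then 1 else -1.
Proof. by move=> nz; rewrite /chi (negbTE nz) issq_pm. Qed.

Lemma chiM (x y : F) : chi (x * y) = chi x * chi y.
Proof.
have [->|xnz] := eqVneq x 0; first by rewrite mul0r chi0 mul0r.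
have [->|ynz] := eqVneq y 0; first by rewrite mulr0 chi0 mulr0.
rewrite !chi_nz ?mulf_neq0 // exprMn.
have hN := N1_neq1; have hN' : (1 : F) != -1 by rewrite eq_sym.
by case: (pm_cases xnz) => ->; case: (pm_cases ynz) => ->;
  rewrite ?mulr1 ?mul1r ?mulN1r ?opprK ?eqxx ?(negbTE hN) ?(negbTE hN').
Qed.

Lemma chi_sq (x : F) : x != 0 -> chi x * chi x = 1.
Proof. by move=> nz; rewrite chi_nz //; case: ifP. Qed.

Lemma chiN1 : chi (-1) = 1.
Proof.
rewrite chi_nz ?oppr_eq0 ?oner_neq0 //.
by rewrite /m mulnC exprM sqrrN expr1n expr1n eqxx.
Qed.

Lemma chiN (x : F) : chi (- x) = chi x.
Proof. by rewrite -mulN1r chiM chiN1 mul1r. Qed.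

Lemma chiB (x y : F) : chi (x - y) = chi (y - x).
Proof. by rewrite -chiN opprB. Qed.

Lemma nonsq_ex : exists g : F, (g != 0) && ~~ issq g.
Proof.
case: (pickP (fun g : F => (g != 0) && ~~ issq g)) => [g h|H]; first by exists g.
have : [set x : F | x != 0] \subset Ssq.
  apply/subsetP=> x; rewrite !inE => nz; rewrite nz /=.
  by have := H x; rewrite nz /= => /negbFE.
move/subset_leq_card; rewrite card_nz card_Ssq; have := m_gt0; lia.
Qed.

Lemma chi_sum : \sum_(x : F) chi x = 0.
Proof.
have [g /andP [gnz gns]] := nonsq_ex.
have cg : chi g = -1 by rewrite /chi (negbTE gnz) (negbTE gns).
have e : \sum_(x : F) chi x = - \sum_(x : F) chi x.
  rewrite {1}(reindex_inj (mulfI gnz)) /=.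
  rewrite -sumrN; apply: eq_bigr => x _; by rewrite chiM cg mulN1r.
have : 2%:R * \sum_(x : F) chi x = 0.
  by rewrite mulr2n mulrDl mul1r {1}e addNr.
by move/eqP; rewrite mulf_eq0 => /orP [//|/eqP].
Qed.

Lemma chi_sumB (c : F) : \sum_(x : F) chi (c - x) = 0.
Proof.
rewrite (reindex_inj (inv_inj (subKr c))) /=.
rewrite -[RHS](chi_sum); apply: eq_bigr => x _; congr chi; exact: (subKr c x).
Qed.

Lemma jac0 (c : F) : c != 0 -> \sum_(z : F) chi z * chi (z + c) = -1.
Proof.
move=> cnz.
have pt : forall z : F, chi z * chi (z + c) = chi (1 + c * z^-1) - (z == 0)%:R.
  move=> z; have [->|znz] := eqVneq z 0.
    by rewrite chi0 mul0r invr0 mulr0 addr0 /chi oner_eq0; rewrite (_ : issq 1) //;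
       apply/existsP; exists 1; rewrite mulr1.
  rewrite subr0 (_ : z + c = z * (1 + c * z^-1)); last first.
    by rewrite mulrDr mulr1 mulrCA divff // mulr1.
  by rewrite chiM mulrA chi_sq // mul1r.
rewrite (eq_bigr _ (fun z _ => pt z)) sumrB.
have inj : injective (fun z : F => 1 + c * z^-1).
  move=> x y /addrI /(mulfI cnz); exact: invr_inj.
rewrite -(reindex_inj (P := xpredT) (F := fun x => chi x) inj) chi_sum add0r.
rewrite (bigD1 0) //= eqxx big1 ?addr0 //.
by move=> i /negbTE ->.
Qed.

Lemma jac (a b : F) : a != b -> \sum_(x : F) chi (a - x) * chi (b - x) = -1.
Proof.
move=> ab; rewrite -(jac0 (c := b - a)); last by rewrite subr_eq0 eq_sym.
rewrite (reindex_inj (inv_inj (subKr a))) /=.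
apply: eq_bigr => z _; rewrite (subKr a z); congr (_ * _).
by congr chi; ring.
Qed.
End Chi.


Definition sgn (b : bool) : int := if b then 1 else -1.
Definition tt (p j e a : bool) := (p == (j == e)) == a.

Lemma tt_false p e a : tt p false e a = ~~ tt p true e a.
Proof. by case: p; case: e; case: a. Qed.
Lemma sgn_tt p e a : sgn (tt p true e a) = sgn e * sgn a * sgn p.
Proof. by case: p; case: e; case: a. Qed.

Lemma card_sum (V : finType) (P : pred V) :
  (#|[set u | P u]|%:R : int) = \sum_(u : V) ((P u : nat)%:R).
Proof.
rewrite -sum1_card natr_sum big_mkcond /=; apply: eq_bigr => u _.
by rewrite inE; case: (P u).
Qed.

Lemma sum_pair_bool (V : finType) (h : V * bool -> int) :
  \sum_(u : V * bool) h u = \sum_(v : V) (h (v, true) + h (v, false)).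
Proof.
transitivity (\sum_(v : V) \sum_(j : bool) h (v, j)); last first.
  by apply: eq_bigr => v _; rewrite big_bool.
by rewrite pair_bigA /=; apply: eq_bigr => [[v j]].
Qed.

Lemma sum_option (V : finType) (g : option V -> int) :
  \sum_(w : option V) g w = g None + \sum_(x : V) g (Some x).
Proof.
rewrite (bigD1 None) //=; congr (_ + _).
rewrite (reindex_omap Some id) /=; last by case.
by apply: eq_bigl => x; rewrite eqxx.
Qed.

Lemma sum_ind (V : finType) (v : V) : \sum_(x : V) ((x == v : nat)%:R : int) = 1.
Proof.
rewrite (bigD1 v) //= eqxx big1 ?addr0 //.
by move=> i /negbTE ->.
Qed.

Lemma sum_const1 (V : finType) : \sum_(x : V) (1 : int) = #|V|%:R.
Proof. by rewrite sumr_const cardT -cardE. Qed.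

Lemma div_lb (n c k : nat) : (0 < c)%N -> (n%:R <= (c * k)%:R :> int) -> (n %/ c <= k)%N.
Proof.
move=> c0; rewrite ler_nat => /(leq_div2r c); rewrite mulKn //.
Qed.

Lemma chi_cases (F : finFieldType) (d : F) : chi d = 0 \/ chi d = 1 \/ chi d = -1.
Proof. rewrite /chi; case: ifP => _; [by left|]; case: ifP => _; right; [by left|by right]. Qed.

Lemma chi_sgn (F : finFieldType) (d : F) : d != 0 -> chi d = sgn (issq d).
Proof. by move=> nz; rewrite /chi (negbTE nz). Qed.

Lemma Ybound (F : finFieldType) (b1 b2 : bool) (d1 d2 : F) :
  sgn b1 * chi d1 * (sgn b2 * chi d2) <= 1.
Proof.
by case: b1; case: b2; case: (chi_cases d1) => [->|[->|->]];
  case: (chi_cases d2) => [->|[->|->]].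
Qed.

Lemma fin_lb (q c k N : nat) : (0 < c)%N ->
  (q%:R - N%:R <= (c * k)%:R :> int) -> ((q - N) %/ c <= k)%N.
Proof.
move=> c0 h; apply: div_lb => //; rewrite ler_nat.
move: h; rewrite lerBlDr -natrD ler_nat; lia.
Qed.

Lemma B3 (t1 t2 t3 : bool) :
  1 + sgn t1 * sgn t2 + sgn t1 * sgn t3 + sgn t2 * sgn t3
  <= 4 * ((t1 && t2 && t3 : nat)%:R + (~~ t1 && ~~ t2 && ~~ t3 : nat)%:R).
Proof. by case: t1; case: t2; case: t3. Qed.

Lemma Ybound2 (F : finFieldType) (e a e' a' : bool) (d d' : F) :
  sgn e * sgn a * chi d * (sgn e' * sgn a' * chi d') <= 1.
Proof.
by case: e; case: a; case: e'; case: a'; case: (chi_cases d) => [->|[->|->]];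
  case: (chi_cases d') => [->|[->|->]].
Qed.

Lemma inj_lb (A B : finType) (P : pred A) (Q : pred B) (g : A -> B) :
  injective g -> (forall a, P a -> Q (g a)) ->
  (#|[set a | P a]| <= #|[set b | Q b]|)%N.
Proof.
move=> inj H; rewrite -(card_imset _ inj); apply: subset_leq_card.
apply/subsetP=> b /imsetP [a Pa ->]; rewrite inE; apply: H.
by move: Pa; rewrite inE.
Qed.

Lemma sgn_eq (a b : bool) : sgn (a == b) = sgn a * sgn b.
Proof. by case: a; case: b. Qed.

Lemma B2 (t1 t2 : bool) :
  1 + sgn t1 + sgn t2 + sgn t1 * sgn t2 <= 4 * ((t1 && t2 : nat)%:R).
Proof. by case: t1; case: t2. Qed.

Lemma B2' (t1 t2 : bool) :
  1 + sgn t1 * sgn t2 <= 2 * ((t1 && t2 : nat)%:R + (~~ t1 && ~~ t2 : nat)%:R).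
Proof. by case: t1; case: t2. Qed.

Lemma B2N (t1 t2 : bool) :
  1 <= 2 * ((t1 && t2 : nat)%:R + (~~ t1 && ~~ t2 : nat)%:R) - sgn t1 * sgn t2.
Proof. by case: t1; case: t2. Qed.

Lemma B3N (t1 t2 t3 : bool) :
  1 <= 4 * ((t1 && t2 && t3 : nat)%:R + (~~ t1 && ~~ t2 && ~~ t3 : nat)%:R)
    - (sgn t1 * sgn t2 + sgn t1 * sgn t3 + sgn t2 * sgn t3).
Proof. by case: t1; case: t2; case: t3. Qed.

Lemma Ybound1 (F : finFieldType) (a : bool) (d : F) : sgn a * chi d <= 1.
Proof. by case: a; case: (chi_cases d) => [->|[->|->]]. Qed.

Lemma YboundE (F : finFieldType) (e a : bool) (d : F) : sgn e * sgn a * chi d <= 1.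
Proof. by case: e; case: a; case: (chi_cases d) => [->|[->|->]]. Qed.

Lemma Ybound2' (F : finFieldType) (a a' : bool) (d d' : F) :
  sgn a * chi d * (sgn a' * chi d') <= 1.
Proof.
by case: a; case: a'; case: (chi_cases d) => [->|[->|->]];
  case: (chi_cases d') => [->|[->|->]].
Qed.

Definition posp (F : finFieldType) (w v : option F) : bool :=
  match w, v with Some a, Some b => issq (b - a) | _, _ => true end.

Definition cT (F : finFieldType) (v : option F) (e a : bool) (w : option F) (j : bool) :=
  (w != v) && tt (posp w v) j e a.

Section Core.
Variable F : finFieldType.
Hypothesis hq : (#|F| %% 4 = 1)%N.
Local Notation q := #|F|.

Lemma sumYY (bi bj : int) (vi vj : F) : vi != vj ->
  \sum_(y : F) (bi * chi (vi - y)) * (bj * chi (vj - y)) = - (bi * bj).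
Proof.
move=> h; rewrite (eq_bigr (fun y => (bi * bj) * (chi (vi - y) * chi (vj - y)))).
  by rewrite -mulr_sumr (jac hq) // mulrN1.
by move=> y _; ring.
Qed.

Lemma sumY (bi : int) (vi : F) : \sum_(y : F) bi * chi (vi - y) = 0.
Proof. by rewrite -mulr_sumr (chi_sumB hq) mulr0. Qed.

Definition c1 (v : F) (e a : bool) (y : F) (j : bool) :=
  (y != v) && tt (issq (v - y)) j e a.

Definition f3 (b1 b2 b3 : int) (v1 v2 v3 y : F) : int :=
   1 + (b1 * chi (v1 - y)) * (b2 * chi (v2 - y))
   + (b1 * chi (v1 - y)) * (b3 * chi (v3 - y))
   + (b2 * chi (v2 - y)) * (b3 * chi (v3 - y))
   - 2 * ((y == v1 : nat)%:R) - 2 * ((y == v2 : nat)%:R) - 2 * ((y == v3 : nat)%:R).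

Lemma sum_f3 (b1 b2 b3 : int) (v1 v2 v3 : F) :
  v1 != v2 -> v1 != v3 -> v2 != v3 ->
  \sum_(y : F) f3 b1 b2 b3 v1 v2 v3 y =
    q%:R - (b1 * b2) - (b1 * b3) - (b2 * b3) - 6.
Proof.
move=> h12 h13 h23.
rewrite /f3 !(big_split, sumrN, sumrB) /= -!mulr_sumr !sum_ind sum_const1.
rewrite !sumYY //; ring.
Qed.

Lemma pt3 (v1 v2 v3 y : F) (e1 e2 e3 a1 a2 a3 : bool) :
  v1 != v2 -> v1 != v3 -> v2 != v3 ->
  f3 (sgn e1 * sgn a1) (sgn e2 * sgn a2) (sgn e3 * sgn a3) v1 v2 v3 y <=
  4 * ((c1 v1 e1 a1 y true && c1 v2 e2 a2 y true && c1 v3 e3 a3 y true : nat)%:R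
     + (c1 v1 e1 a1 y false && c1 v2 e2 a2 y false && c1 v3 e3 a3 y false : nat)%:R).
Proof.
move=> h12 h13 h23; rewrite /f3.
have R0 : forall n n' : nat, 0 <= 4 * (n%:R + n'%:R :> int).
  by move=> n n'; rewrite mulr_ge0 ?addr_ge0 ?ler0n.
have [->|n1] := eqVneq y v1.
  apply: le_trans (R0 _ _).
  rewrite subrr chi0 (negbTE h12) (negbTE h13) !mulr0 !mul0r.
  have := Ybound2 e2 a2 e3 a3 (v2 - v1) (v3 - v1).
  rewrite /=; lra.
have [->|n2] := eqVneq y v2.
  apply: le_trans (R0 _ _).
  rewrite subrr chi0 (negbTE h23) !mulr0 ?mul0r.
  have := Ybound2 e1 a1 e3 a3 (v1 - v2) (v3 - v2).
  rewrite /=; lra.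
have [->|n3] := eqVneq y v3.
  apply: le_trans (R0 _ _).
  rewrite subrr chi0 !mulr0 ?mul0r.
  have := Ybound2 e1 a1 e2 a2 (v1 - v3) (v2 - v3).
  rewrite /=; lra.
have d1 : v1 - y != 0 by rewrite subr_eq0 eq_sym.
have d2 : v2 - y != 0 by rewrite subr_eq0 eq_sym.
have d3 : v3 - y != 0 by rewrite subr_eq0 eq_sym.
rewrite !chi_sgn // /c1 n1 n2 n3 !tt_false /= -!sgn_tt.
rewrite !mulr0 !subr0; exact: B3.
Qed.

Lemma AT3 (v1 v2 v3 : F) (e1 e2 e3 a1 a2 a3 : bool) :
  v1 != v2 -> v1 != v3 -> v2 != v3 ->
  ((q - 9) %/ 4 <= #|[set u : F * bool |
     c1 v1 e1 a1 u.1 u.2 && c1 v2 e2 a2 u.1 u.2 && c1 v3 e3 a3 u.1 u.2]|)%N.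
Proof.
move=> h12 h13 h23; apply: fin_lb => //.
rewrite natrM card_sum sum_pair_bool mulr_sumr /=.
set b1 := sgn e1 * sgn a1; set b2 := sgn e2 * sgn a2; set b3 := sgn e3 * sgn a3.
have bnd : q%:R - 9 <= \sum_(y : F) f3 b1 b2 b3 v1 v2 v3 y.
  rewrite sum_f3 //.
  have s12 : b1 * b2 <= 1 by rewrite /b1 /b2; clear; case: e1; case: a1; case: e2; case: a2.
  have s13 : b1 * b3 <= 1 by rewrite /b1 /b3; clear; case: e1; case: a1; case: e3; case: a3.
  have s23 : b2 * b3 <= 1 by rewrite /b2 /b3; clear; case: e2; case: a2; case: e3; case: a3.
  lra.
apply: (le_trans bnd); apply: ler_sum => y _; exact: pt3.
Qed.

Lemma cT_some (v y : F) e a j : cT (Some v) e a (Some y) j = c1 v e a y j.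
Proof. by rewrite /cT /c1 /= (inj_eq (@Some_inj _)). Qed.

Lemma SP1 (v : F) (a : bool) :
  ((q - 1) %/ 2 <= #|[set u : F | (u != v) && (issq (v - u)%R == a)]|)%N.
Proof.
apply: fin_lb => //; rewrite natrM card_sum mulr_sumr.
pose f (y : F) := 1 + sgn a * chi (v - y) - (y == v : nat)%:R.
have sm : \sum_(y : F) f y = q%:R - 1.
  rewrite /f !(big_split, sumrN, sumrB) /= sum_ind sum_const1 sumY; ring.
rewrite -sm; apply: ler_sum => y _; rewrite /f.
have [->|n1] := eqVneq y v.
  by rewrite subrr chi0 mulr0 addr0 subrr mulr_ge0 ?ler0n.
rewrite chi_sgn ?subr_eq0 1?eq_sym // -sgn_eq subr0 /=.
by case: (_ == _).
Qed.

Lemma SP2 (v1 v2 : F) (a1 a2 : bool) : v1 != v2 ->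
  ((q - 5) %/ 4 <= #|[set u : F | ((u != v1) && (issq (v1 - u)%R == a1)) &&
                                   ((u != v2) && (issq (v2 - u)%R == a2))]|)%N.
Proof.
move=> h12; apply: fin_lb => //; rewrite natrM card_sum mulr_sumr.
pose f (y : F) := 1 + sgn a1 * chi (v1 - y) + sgn a2 * chi (v2 - y)
  + (sgn a1 * chi (v1 - y)) * (sgn a2 * chi (v2 - y))
  - 2 * (y == v1 : nat)%:R - 2 * (y == v2 : nat)%:R.
have sm : \sum_(y : F) f y = q%:R - sgn a1 * sgn a2 - 4.
  rewrite /f !(big_split, sumrN, sumrB) /= sumYY // !sumY -!mulr_sumr.
  rewrite !sum_ind sum_const1; ring.
have bnd : q%:R - 5 <= \sum_(y : F) f y.
  rewrite sm; have : sgn a1 * sgn a2 <= 1 by clear; case: a1; case: a2.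
  lra.
apply: (le_trans bnd); apply: ler_sum => y _; rewrite /f.
have R0 : forall n : nat, 0 <= 4 * (n%:R : int) by move=> n; rewrite mulr_ge0 ?ler0n.
have [->|n1] := eqVneq y v1.
  apply: le_trans (R0 _).
  rewrite subrr chi0 (negbTE h12) !mulr0 ?mul0r.
  have := Ybound1 a2 (v2 - v1); rewrite /=; lra.
have [->|n2] := eqVneq y v2.
  apply: le_trans (R0 _).
  rewrite subrr chi0 !mulr0 ?mul0r.
  have := Ybound1 a1 (v1 - v2); rewrite /=; lra.
rewrite !chi_sgn ?subr_eq0 1?eq_sym // 1?eq_sym //.
rewrite -!sgn_eq /= !mulr0 !subr0 (eq_sym (issq (v1 - y))) (eq_sym (issq (v2 - y))).
by move: (a1 == _) (a2 == _) => t1 t2; case: t1; case: t2.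

Qed.

Lemma opt_lb (g : option F -> int) (A B : int) :
  A <= g None -> B <= \sum_(x : F) g (Some x) -> A + B <= \sum_(w : option F) g w.
Proof. by move=> h1 h2; rewrite sum_option lerD. Qed.

Definition f2 (b1 b2 : int) (v1 v2 y : F) : int :=
  1 + (b1 * chi (v1 - y)) * (b2 * chi (v2 - y))
    - (y == v1 : nat)%:R - (y == v2 : nat)%:R.

Lemma sum_f2 (b1 b2 : int) (v1 v2 : F) : v1 != v2 ->
  \sum_(y : F) f2 b1 b2 v1 v2 y = q%:R - b1 * b2 - 2.
Proof.
move=> h12; rewrite /f2 !(big_split, sumrN, sumrB) /= sumYY // !sum_ind sum_const1.
ring.
Qed.

Lemma pt2 (v1 v2 y : F) (e1 e2 a1 a2 : bool) : v1 != v2 ->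
  f2 (sgn e1 * sgn a1) (sgn e2 * sgn a2) v1 v2 y <=
  2 * ((c1 v1 e1 a1 y true && c1 v2 e2 a2 y true : nat)%:R
     + (c1 v1 e1 a1 y false && c1 v2 e2 a2 y false : nat)%:R).
Proof.
move=> h12; rewrite /f2.
have R0 : forall n n' : nat, 0 <= 2 * (n%:R + n'%:R :> int).
  by move=> n n'; rewrite mulr_ge0 ?addr_ge0 ?ler0n.
have [->|n1] := eqVneq y v1.
  apply: le_trans (R0 _ _).
  rewrite subrr chi0 (negbTE h12) !mulr0 ?mul0r /=. lra.
have [->|n2] := eqVneq y v2.
  apply: le_trans (R0 _ _).
  rewrite subrr chi0 !mulr0 ?mul0r /=; lra.
have d1 : v1 - y != 0 by rewrite subr_eq0 eq_sym.
have d2 : v2 - y != 0 by rewrite subr_eq0 eq_sym.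
rewrite !chi_sgn // /c1 n1 n2 !tt_false /= -!sgn_tt.
rewrite !subr0; exact: B2'.
Qed.

Lemma bb1 (e1 a1 e2 a2 : bool) : sgn e1 * sgn a1 * (sgn e2 * sgn a2) <= 1.
Proof. by case: e1; case: a1; case: e2; case: a2. Qed.

Lemma AT2 (v1 v2 : F) (e1 e2 a1 a2 : bool) : v1 != v2 ->
  ((q - 3) %/ 2 <= #|[set u : F * bool |
     c1 v1 e1 a1 u.1 u.2 && c1 v2 e2 a2 u.1 u.2]|)%N.
Proof.
move=> h12; apply: fin_lb => //.
rewrite natrM card_sum sum_pair_bool mulr_sumr /=.
have bnd : q%:R - 3 <= \sum_(y : F) f2 (sgn e1 * sgn a1) (sgn e2 * sgn a2) v1 v2 y.
  rewrite sum_f2 //; have := bb1 e1 a1 e2 a2; lra.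
apply: (le_trans bnd); apply: ler_sum => y _; exact: pt2.
Qed.

Lemma Tr2fin (v1 v2 : F) (e1 e2 a1 a2 : bool) : v1 != v2 ->
  ((q - 1) %/ 2 <= #|[set u : option F * bool |
     cT (Some v1) e1 a1 u.1 u.2 && cT (Some v2) e2 a2 u.1 u.2]|)%N.
Proof.
move=> h12; apply: fin_lb => //.
rewrite natrM card_sum sum_pair_bool mulr_sumr /=.
set b1 := sgn e1 * sgn a1; set b2 := sgn e2 * sgn a2.
apply: le_trans (opt_lb (A := 1 + b1 * b2) (B := q%:R - b1 * b2 - 2) _ _).
- lra.
- rewrite /cT /= !tt_false.
  have := B2N (tt true true e1 a1) (tt true true e2 a2).
  rewrite !sgn_tt /= !mulr1 -/b1 -/b2; lra.
- rewrite -(sum_f2 b1 b2 h12); apply: ler_sum => y _; rewrite !cT_some; exact: pt2.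
Qed.

Lemma Tr3fin (v1 v2 v3 : F) (e1 e2 e3 a1 a2 a3 : bool) :
  v1 != v2 -> v1 != v3 -> v2 != v3 ->
  ((q - 5) %/ 4 <= #|[set u : option F * bool |
     cT (Some v1) e1 a1 u.1 u.2 && cT (Some v2) e2 a2 u.1 u.2 &&
     cT (Some v3) e3 a3 u.1 u.2]|)%N.
Proof.
move=> h12 h13 h23; apply: fin_lb => //.
rewrite natrM card_sum sum_pair_bool mulr_sumr /=.
set b1 := sgn e1 * sgn a1; set b2 := sgn e2 * sgn a2; set b3 := sgn e3 * sgn a3.
apply: le_trans (opt_lb (A := 1 + (b1 * b2 + b1 * b3 + b2 * b3))
   (B := q%:R - b1 * b2 - b1 * b3 - b2 * b3 - 6) _ _).
- lra.
- rewrite /cT /= !tt_false.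
  have := B3N (tt true true e1 a1) (tt true true e2 a2) (tt true true e3 a3).
  rewrite !sgn_tt /= !mulr1 -/b1 -/b2 -/b3; lra.
- rewrite -(sum_f3 b1 b2 b3 h12 h13 h23); apply: ler_sum => y _; rewrite !cT_some; exact: pt3.
Qed.


Definition jsol (p e a : bool) := (p == a) == e.
Lemma tt_sol p e a : tt p (jsol p e a) e a.
Proof. by case: p; case: e; case: a. Qed.
Lemma tt_gam p x a : p == (x == a) -> (p == x) == a.
Proof. by case: p; case: x; case: a. Qed.

Lemma card_neq (V : finType) (v : V) : #|[set y : V | y != v]| = (#|V| - 1)%N.
Proof.
rewrite subn1 -(cardsC1 v); apply: eq_card => y; by rewrite !inE.
Qed.

Lemma AT1 (v : F) (e a : bool) :
  (q - 1 <= #|[set u : F * bool | c1 v e a u.1 u.2]|)%N.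
Proof.
rewrite -(card_neq v).
apply: (inj_lb (g := fun y => (y, jsol (issq (v - y)) e a))).
  by move=> y z [].
by move=> y /= nv; rewrite /c1 nv tt_sol.
Qed.

Lemma Tr1 (v : option F) (e a : bool) :
  (q <= #|[set u : option F * bool | cT v e a u.1 u.2]|)%N.
Proof.
have -> : q = (#|{: option F}| - 1)%N by rewrite card_option subn1.
rewrite -(card_neq v).
apply: (inj_lb (g := fun w => (w, jsol (posp w v) e a))).
  by move=> y z [].
by move=> y /= nv; rewrite /cT nv tt_sol.
Qed.

Lemma Tr2none (v : F) (e1 a1 e2 a2 : bool) :
  ((q - 1) %/ 2 <= #|[set u : option F * bool |
     cT (Some v) e1 a1 u.1 u.2 && cT None e2 a2 u.1 u.2]|)%N.
Proof.
set j0 := jsol true e2 a2.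
apply: leq_trans (SP1 v ((j0 == e1) == a1)) _.
apply: (inj_lb (g := fun y => (Some y, j0))).
  by move=> y z [].
move=> y /andP [nv h] /=; rewrite cT_some /c1 nv /=.
apply/andP; split; first exact: tt_gam h.
by rewrite /cT /= tt_sol.
Qed.

Lemma Tr3none (v1 v2 : F) (e1 a1 e2 a2 e3 a3 : bool) : v1 != v2 ->
  ((q - 5) %/ 4 <= #|[set u : option F * bool |
     cT (Some v1) e1 a1 u.1 u.2 && cT (Some v2) e2 a2 u.1 u.2 &&
     cT None e3 a3 u.1 u.2]|)%N.
Proof.
move=> h12; set j0 := jsol true e3 a3.
apply: leq_trans (SP2 ((j0 == e1) == a1) ((j0 == e2) == a2) h12) _.
apply: (inj_lb (g := fun y => (Some y, j0))).
  by move=> y z [].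
move=> y /andP [/andP [n1 h1] /andP [n2 h2]] /=.
rewrite !cT_some /c1 n1 n2 /=.
apply/andP; split; first by apply/andP; split; [exact: tt_gam h1|exact: tt_gam h2].
by rewrite /cT /= tt_sol.
Qed.

End Core.


Lemma ord_inord (k n : nat) (Hn : (n < k.+1)%N) : Ordinal Hn = inord n.
Proof. by apply: val_inj; rewrite /= inordK. Qed.

Lemma forall1 (P : pred 'I_1) : [forall i, P i] = P ord0.
Proof.
apply/forallP/idP => [H|h [[|k] Hk]] //.
by rewrite (_ : Ordinal Hk = ord0) //; apply: val_inj.
Qed.

Lemma forall2 (P : pred 'I_2) : [forall i, P i] = P (inord 0) && P (inord 1).
Proof.
apply/forallP/idP => [H|/andP [h0 h1] [[|[|k]] Hk]]; first by rewrite !H.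
- by rewrite ord_inord.
- by rewrite ord_inord.
- by [].
Qed.

Lemma forall3 (P : pred 'I_3) :
  [forall i, P i] = P (inord 0) && P (inord 1) && P (inord 2).
Proof.
apply/forallP/idP => [H|/andP [/andP [h0 h1] h2] [[|[|[|k]]] Hk]]; first by rewrite !H.
- by rewrite ord_inord.
- by rewrite ord_inord.
- by rewrite ord_inord.
- by [].
Qed.

Lemma clq (V : finType) (G : sigraph V) (k : nat) (X : k.-tuple V) (i j : 'I_k) :
  clique_seq G X -> i != j -> sg_adj G (tnth X i) (tnth X j).
Proof. by case/andP=> _ /forallP /(_ i) /forallP /(_ j) /implyP. Qed.

Lemma inord_neq (k a b : nat) : (a < k.+1)%N -> (b < k.+1)%N -> a != b ->
  (inord a : 'I_k.+1) != inord b.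
Proof. by move=> ha hb hab; apply/eqP => /(congr1 val); rewrite /= !inordK //; apply/eqP. Qed.


Local Close Scope ring_scope.

Theorem mainTheorem10 (F : finFieldType) (hq : (#|F| %% 4 = 1)%N) :
  let q := #|F| in
  (propP (SP F) 1 ((q - 1) %/ 2) /\ propP (SP F) 2 ((q - 5) %/ 4)) /\
  (propP (Tr F) 1 q /\ propP (Tr F) 2 ((q - 1) %/ 2) /\
   propP (Tr F) 3 ((q - 5) %/ 4)) /\
  (propP (AT (SP F)) 1 (q - 1) /\ propP (AT (SP F)) 2 ((q - 3) %/ 2) /\
   propP (AT (SP F)) 3 (maxn 0 ((q - 9) %/ 4))).
Proof.
move=> q; rewrite /q.
have n01 : (inord 0 : 'I_2) != inord 1 by apply: inord_neq.
have m01 : (inord 0 : 'I_3) != inord 1 by apply: inord_neq.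
have m02 : (inord 0 : 'I_3) != inord 2 by apply: inord_neq.
have m12 : (inord 1 : 'I_3) != inord 2 by apply: inord_neq.
split; [split|split; [split; [|split]|split; [|split]]].
-
  move=> X _ alpha.
  rewrite (_ : [set u | successor (SP F) X alpha u] =
    [set u | (u != tnth X ord0) && (issq (tnth X ord0 - u)%R == tnth alpha ord0)]);
    last by apply/setP => u; rewrite !inE /successor forall1.
  exact: (SP1 hq).
-
  move=> X hX alpha.
  have h12 := clq hX n01.
  rewrite (_ : [set u | successor (SP F) X alpha u] =
    [set u | ((u != tnth X (inord 0)) && (issq (tnth X (inord 0) - u)%R == tnth alpha (inord 0)))
          && ((u != tnth X (inord 1)) && (issq (tnth X (inord 1) - u)%R == tnth alpha (inord 1)))]);
    last by apply/setP => u; rewrite !inE /successor forall2.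
  exact: (SP2 hq).
-
  move=> X _ alpha.
  rewrite (_ : [set u | successor (Tr F) X alpha u] =
    [set u | cT (tnth X ord0).1 (tnth X ord0).2 (tnth alpha ord0) u.1 u.2]);
    last by apply/setP => u; rewrite !inE /successor forall1.
  exact: Tr1.
-
  move=> X hX alpha.
  have h12 : (tnth X (inord 0)).1 != (tnth X (inord 1)).1 := clq hX n01.
  rewrite (_ : [set u | successor (Tr F) X alpha u] =
    [set u | cT (tnth X (inord 0)).1 (tnth X (inord 0)).2 (tnth alpha (inord 0)) u.1 u.2
          && cT (tnth X (inord 1)).1 (tnth X (inord 1)).2 (tnth alpha (inord 1)) u.1 u.2]);
    last by apply/setP => u; rewrite !inE /successor forall2.
  move: h12; case: (tnth X (inord 0)) => w1 e1; case: (tnth X (inord 1)) => w2 e2 /=.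
  case: w1 => [v1|]; case: w2 => [v2|] // h12.
  + by apply: (Tr2fin hq); rewrite (inj_eq (@Some_inj _)) in h12.
  + exact: (Tr2none hq).
  + apply: leq_trans (Tr2none hq v2 e2 (tnth alpha (inord 1)) e1 (tnth alpha (inord 0))) _.
    by apply: subset_leq_card; apply/subsetP => u; rewrite !inE andbC.
-
  move=> X hX alpha.
  have h12 : (tnth X (inord 0)).1 != (tnth X (inord 1)).1 := clq hX m01.
  have h13 : (tnth X (inord 0)).1 != (tnth X (inord 2)).1 := clq hX m02.
  have h23 : (tnth X (inord 1)).1 != (tnth X (inord 2)).1 := clq hX m12.
  rewrite (_ : [set u | successor (Tr F) X alpha u] =
    [set u | cT (tnth X (inord 0)).1 (tnth X (inord 0)).2 (tnth alpha (inord 0)) u.1 u.2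
          && cT (tnth X (inord 1)).1 (tnth X (inord 1)).2 (tnth alpha (inord 1)) u.1 u.2
          && cT (tnth X (inord 2)).1 (tnth X (inord 2)).2 (tnth alpha (inord 2)) u.1 u.2]);
    last by apply/setP => u; rewrite !inE /successor forall3.
  move: h12 h13 h23.
  case: (tnth X (inord 0)) => w1 e1; case: (tnth X (inord 1)) => w2 e2;
  case: (tnth X (inord 2)) => w3 e3 /=.
  set a1 := tnth alpha (inord 0); set a2 := tnth alpha (inord 1); set a3 := tnth alpha (inord 2).
  case: w1 => [v1|]; case: w2 => [v2|]; case: w3 => [v3|] // h12 h13 h23;
    rewrite ?(inj_eq (@Some_inj _)) in h12 h13 h23.
  + exact: (Tr3fin hq).
  + exact: (Tr3none hq).
  + apply: leq_trans (Tr3none hq e1 a1 e3 a3 e2 a2 h13) _.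
    apply: subset_leq_card; apply/subsetP => u.
    by rewrite !inE => /andP [/andP [p1 p2] p3]; rewrite ?p1 ?p2 ?p3.
  + apply: leq_trans (Tr3none hq e2 a2 e3 a3 e1 a1 h23) _.
    apply: subset_leq_card; apply/subsetP => u.
    by rewrite !inE => /andP [/andP [p1 p2] p3]; rewrite ?p1 ?p2 ?p3.
-
  move=> X _ alpha.
  rewrite (_ : [set u | successor (AT (SP F)) X alpha u] =
    [set u | c1 (tnth X ord0).1 (tnth X ord0).2 (tnth alpha ord0) u.1 u.2]);
    last by apply/setP => u; rewrite !inE /successor forall1.
  exact: AT1.
-
  move=> X hX alpha.
  have h12 : (tnth X (inord 0)).1 != (tnth X (inord 1)).1 := clq hX n01.
  rewrite (_ : [set u | successor (AT (SP F)) X alpha u] =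
    [set u | c1 (tnth X (inord 0)).1 (tnth X (inord 0)).2 (tnth alpha (inord 0)) u.1 u.2
          && c1 (tnth X (inord 1)).1 (tnth X (inord 1)).2 (tnth alpha (inord 1)) u.1 u.2]);
    last by apply/setP => u; rewrite !inE /successor forall2.
  exact: (AT2 hq).
-
  move=> X hX alpha; rewrite max0n.
  have h12 : (tnth X (inord 0)).1 != (tnth X (inord 1)).1 := clq hX m01.
  have h13 : (tnth X (inord 0)).1 != (tnth X (inord 2)).1 := clq hX m02.
  have h23 : (tnth X (inord 1)).1 != (tnth X (inord 2)).1 := clq hX m12.
  rewrite (_ : [set u | successor (AT (SP F)) X alpha u] =
    [set u | c1 (tnth X (inord 0)).1 (tnth X (inord 0)).2 (tnth alpha (inord 0)) u.1 u.2
          && c1 (tnth X (inord 1)).1 (tnth X (inord 1)).2 (tnth alpha (inord 1)) u.1 u.2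
          && c1 (tnth X (inord 2)).1 (tnth X (inord 2)).2 (tnth alpha (inord 2)) u.1 u.2]);
    last by apply/setP => u; rewrite !inE /successor forall3.
  exact: (AT3 hq).
Qed.
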